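(* Assume $\hat\omega$ lies in the interior of $\mathbb{P}_\Omega$. The vertex-direction iteration with optimal step size $\alpha_n=\hat\alpha_n$, initialized at any $\omega^{(1)}\in\mathbb{P}_\Omega$, satisfies $$\|\omega^{(n+1)}-\hat\omega\|_{\mathbf K}^2\le\|\omega^{(1)}-\hat\omega\|_{\mathbf K}^2\exp\Big(-\frac{\alpha_*^2\,n}{4R_*^2}\Big),\qquad n\ge1,$$ where $R_*=[\lambda_{\max}(\mathbf K)(1-1/\Omega)]^{1/2}$, $\alpha_*=w_*/L$, $w_*=\min_i\hat\omega_i$ and $L=(\max_i\{\mathbf K^{-1}\}_{ii})^{1/2}$.
   Context: $\mathbf K$ is a real symmetric positive definite $\Omega\times\Omega$ matrix ($\Omega\ge2$) with largest eigenvalue $\lambda_{\max}(\mathbf K)$; $\|u\|_{\mathbf K}^2=u^T\mathbf K u$. $e_i$ is the $i$-th canonical basis vector of $\mathbb{R}^\Omega$ and $\mathbb{P}_\Omega=\{\omega\in\mathbb{R}^\Omega:\omega_i\ge0,\sum_i\omega_i=1\}$. The vertex-direction iteration is $\omega^{(n+1)}=\omega^{(n)}+\alpha_n(e_{i_n^+}-\omega^{(n)})$ with $i_n^+\in\arg\min_{i}e_i^T\mathbf K(\omega^{(n)}-\hat\omega)$; the optimal step size is $\hat\alpha_n=(e_{i_n^+}-\omega^{(n)})^T\mathbf K(\hat\omega-\omega^{(n)})/\|e_{i_n^+}-\omega^{(n)}\|_{\mathbf K}^2$ (if $e_{i_n^+}=\omega^{(n)}$ the iterate is left unchanged). *)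

(* Defs.v *)
From Stdlib Require Import Reals Lra Lia.
Open Scope R_scope.

(* Vectors of R^Omega are functions nat -> R; only indices < Omega matter.
   Matrices are functions nat -> nat -> R. *)
Definition vec := nat -> R.
Definition mat := nat -> nat -> R.

Fixpoint rsum (n : nat) (f : nat -> R) : R :=
  match n with O => 0 | S k => rsum k f + f k end.

Fixpoint rmax_upto (n : nat) (f : nat -> R) : R :=
  match n with O => f O | S k => Rmax (rmax_upto k f) (f (S k)) end.
Fixpoint rmin_upto (n : nat) (f : nat -> R) : R :=
  match n with O => f O | S k => Rmin (rmin_upto k f) (f (S k)) end.

Definition mat_vec (Om : nat) (K : mat) (v : vec) : vec :=
  fun i => rsum Om (fun j => K i j * v j).
Definition dot (Om : nat) (u v : vec) : R := rsum Om (fun i => u i * v i).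
Definition normK2 (Om : nat) (K : mat) (u : vec) : R := dot Om u (mat_vec Om K u).

Definition vsub (u v : vec) : vec := fun i => u i - v i.
Definition vadd (u v : vec) : vec := fun i => u i + v i.
Definition vscale (a : R) (u : vec) : vec := fun i => a * u i.

Definition e_vec (i : nat) : vec := fun j => if Nat.eq_dec j i then 1 else 0.

Definition symmetric (Om : nat) (K : mat) : Prop :=
  forall i j, (i < Om)%nat -> (j < Om)%nat -> K i j = K j i.
Definition nonzero_vec (Om : nat) (v : vec) : Prop :=
  exists i, (i < Om)%nat /\ v i <> 0.
Definition pos_def (Om : nat) (K : mat) : Prop :=
  forall v, nonzero_vec Om v -> 0 < normK2 Om K v.

Definition is_inverse (Om : nat) (K Kinv : mat) : Prop :=
  forall i j, (i < Om)%nat -> (j < Om)%nat ->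
    rsum Om (fun k => K i k * Kinv k j) = (if Nat.eq_dec i j then 1 else 0) /\
    rsum Om (fun k => Kinv i k * K k j) = (if Nat.eq_dec i j then 1 else 0).

Definition is_eigenvalue (Om : nat) (K : mat) (lam : R) : Prop :=
  exists v, nonzero_vec Om v /\ forall i, (i < Om)%nat -> mat_vec Om K v i = lam * v i.
Definition is_lambda_max (Om : nat) (K : mat) (lam : R) : Prop :=
  is_eigenvalue Om K lam /\ forall mu, is_eigenvalue Om K mu -> mu <= lam.

Definition in_simplex (Om : nat) (w : vec) : Prop :=
  (forall i, (i < Om)%nat -> 0 <= w i) /\ rsum Om w = 1.
Definition in_simplex_interior (Om : nat) (w : vec) : Prop :=
  (forall i, (i < Om)%nat -> 0 < w i) /\ rsum Om w = 1.

Definition vec_eq (Om : nat) (u v : vec) : Prop := forall i, (i < Om)%nat -> u i = v i.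

Definition alpha_hat (Om : nat) (K : mat) (what w : vec) (i : nat) : R :=
  dot Om (vsub (e_vec i) w) (mat_vec Om K (vsub what w))
  / normK2 Om K (vsub (e_vec i) w).

Definition is_vertex_choice (Om : nat) (K : mat) (what w : vec) (i : nat) : Prop :=
  (i < Om)%nat /\
  forall j, (j < Om)%nat ->
    mat_vec Om K (vsub w what) i <= mat_vec Om K (vsub w what) j.

Definition vd_step (Om : nat) (K : mat) (what w : vec) (i : nat) (w' : vec) : Prop :=
  (vec_eq Om (e_vec i) w -> vec_eq Om w' w) /\
  (~ vec_eq Om (e_vec i) w ->
     vec_eq Om w' (vadd w (vscale (alpha_hat Om K what w i) (vsub (e_vec i) w)))).

(* Main.v *)
Require Import Defs.
From Stdlib Require Import Reals Lra Lia Classical.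
Open Scope R_scope.

Module MC.
From mathcomp Require Import all_boot all_algebra.
From mathcomp Require Import Rstruct.
Import GRing.Theory.
Local Open Scope ring_scope.
Lemma rsum_big n (f : nat -> R) : rsum n f = \sum_(i < n) f i.
Proof. elim: n => [|n IH] /=; first by rewrite big_ord0.
by rewrite big_ord_recr /= IH. Qed.

Lemma dichot (Om : nat) (M : nat -> nat -> R) :
 (exists v : nat -> R, (exists i, lt i Om /\ v i <> R0) /\
    forall j, lt j Om -> rsum Om (fun i => Rmult (v i) (M i j)) = R0) \/
 (exists N : nat -> nat -> R, forall i j, lt i Om -> lt j Om ->
    rsum Om (fun k => Rmult (N i k) (M k j)) = if Nat.eq_dec i j then R1 else R0).
Proof.
case: Om => [|n].
  by right; exists (fun _ _ => R0) => i j /leP.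
pose A : 'M[R]_n.+1 := \matrix_(i, j) M i j.
have [/eqP/det0P [v vn0 vA]|dn0] := eqVneq (\det A) 0.
  left; exists (fun i => v 0 (inord i)); split.
    have [j vj] : exists j, v 0 j != 0.
      apply/existsP; move: vn0; apply: contraR; rewrite negb_exists => /forallP H.
      by apply/eqP/rowP => j; rewrite mxE; apply/eqP; move: (H j); rewrite negbK.
    exists j; split; first by apply/leP.
    by rewrite inord_val; apply/eqP.
  move=> j /leP jn; rewrite rsum_big.
  transitivity ((v *m A) 0 (inord j)); last by rewrite vA mxE.
  rewrite mxE; apply: eq_bigr => i _; rewrite inord_val mxE inordK //.
right; have Au : A \in unitmx by rewrite unitmxE unitfE.
exists (fun i j => invmx A (inord i) (inord j)) => i j /leP io /leP jo.
rewrite rsum_big.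
transitivity ((invmx A *m A) (inord i) (inord j)).
  rewrite mxE; apply: eq_bigr => k _; rewrite inord_val mxE inordK //.
rewrite mulVmx // mxE.
case: Nat.eq_dec => [e|ne]; first by subst; rewrite eqxx.
case: eqP => // /(congr1 val) /=; rewrite !inordK // => /ne //.
Qed.
End MC.

Set Bullet Behavior "Strict Subproofs".

Lemma rsum_ext n f g : (forall i, (i < n)%nat -> f i = g i) -> rsum n f = rsum n g.
Proof.
  induction n; simpl; intros H; auto.
  rewrite IHn by (intros; apply H; lia). rewrite (H n) by lia. reflexivity.
Qed.
Lemma rsum_plus n f g : rsum n (fun i => f i + g i) = rsum n f + rsum n g.
Proof. induction n; simpl; [lra|rewrite IHn; ring]. Qed.
Lemma rsum_scal n c f : rsum n (fun i => c * f i) = c * rsum n f.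
Proof. induction n; simpl; [ring|rewrite IHn; ring]. Qed.
Lemma rsum_zero n : rsum n (fun _ => 0) = 0.
Proof. induction n; simpl; [ring|rewrite IHn; ring]. Qed.
Lemma rsum_le n f g : (forall i, (i < n)%nat -> f i <= g i) -> rsum n f <= rsum n g.
Proof.
  induction n; simpl; intros H; [lra|].
  assert (rsum n f <= rsum n g) by (apply IHn; intros; apply H; lia).
  assert (f n <= g n) by (apply H; lia). lra.
Qed.
Lemma rsum_nonneg n f : (forall i, (i < n)%nat -> 0 <= f i) -> 0 <= rsum n f.
Proof. intros H. rewrite <- (rsum_zero n). apply rsum_le. auto. Qed.
Lemma rsum_term n f i : (forall j, (j < n)%nat -> 0 <= f j) -> (i < n)%nat -> f i <= rsum n f.
Proof.
  induction n; simpl; intros H Hi; [lia|].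
  destruct (Nat.eq_dec i n).
  - subst. assert (0 <= rsum n f) by (apply rsum_nonneg; intros; apply H; lia). lra.
  - assert (f i <= rsum n f) by (apply IHn; [intros; apply H; lia| lia]).
    assert (0 <= f n) by (apply H; lia). lra.
Qed.
Lemma rsum_swap n m f : rsum n (fun i => rsum m (fun j => f i j)) = rsum m (fun j => rsum n (fun i => f i j)).
Proof.
  induction n; simpl.
  - rewrite rsum_zero. reflexivity.
  - rewrite IHn, <- rsum_plus. reflexivity.
Qed.
Lemma rsum_delta n f j : (j < n)%nat ->
  rsum n (fun k => f k * (if Nat.eq_dec k j then 1 else 0)) = f j.
Proof.
  induction n; simpl; intros Hj; [lia|].
  destruct (Nat.eq_dec n j).
  - subst. rewrite (rsum_ext _ _ (fun _ => 0)).
    + rewrite rsum_zero; ring.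
    + intros i Hi. destruct (Nat.eq_dec i j); [lia|ring].
  - rewrite IHn by lia. ring.
Qed.
Lemma rsum_delta' n f j : (j < n)%nat ->
  rsum n (fun k => (if Nat.eq_dec j k then 1 else 0) * f k) = f j.
Proof.
  intros Hj. rewrite <- (rsum_delta n f j Hj). apply rsum_ext. intros i _.
  destruct (Nat.eq_dec j i), (Nat.eq_dec i j); subst; try ring; congruence.
Qed.
Definition Bf Om (A : mat) (x y : vec) := dot Om x (mat_vec Om A y).
Definition nsq Om (x : vec) := rsum Om (fun i => x i * x i).

Lemma Bf_ext Om A x x' y y' : vec_eq Om x x' -> vec_eq Om y y' ->
  Bf Om A x y = Bf Om A x' y'.
Proof.
  intros Hx Hy. unfold Bf, dot, mat_vec. apply rsum_ext. intros i Hi.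
  rewrite Hx by auto. f_equal. apply rsum_ext. intros j Hj. rewrite Hy by auto. reflexivity.
Qed.
Lemma Bf_ext_mat Om A A' x y : (forall i j, (i < Om)%nat -> (j < Om)%nat -> A i j = A' i j) ->
  Bf Om A x y = Bf Om A' x y.
Proof.
  intros H. unfold Bf, dot, mat_vec. apply rsum_ext. intros i Hi.
  f_equal. apply rsum_ext. intros j Hj. rewrite H by auto. reflexivity.
Qed.
Lemma Bf_linl Om A a b x y z :
  Bf Om A (fun i => a * x i + b * y i) z = a * Bf Om A x z + b * Bf Om A y z.
Proof.
  unfold Bf, dot. rewrite <- !rsum_scal, <- rsum_plus. apply rsum_ext. intros; ring.
Qed.
Lemma Bf_linr Om A a b x y z :
  Bf Om A z (fun i => a * x i + b * y i) = a * Bf Om A z x + b * Bf Om A z y.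
Proof.
  unfold Bf, dot, mat_vec. rewrite <- !rsum_scal, <- rsum_plus. apply rsum_ext. intros i _.
  rewrite (rsum_ext _ _ (fun j => a * (A i j * x j) + b * (A i j * y j))) by (intros; ring).
  rewrite rsum_plus, !rsum_scal. ring.
Qed.
Lemma Bf_double Om A x y :
  Bf Om A x y = rsum Om (fun i => rsum Om (fun j => x i * A i j * y j)).
Proof.
  unfold Bf, dot, mat_vec. apply rsum_ext. intros i _. rewrite <- rsum_scal.
  apply rsum_ext. intros; ring.
Qed.
Lemma Bf_sym Om A x y : symmetric Om A -> Bf Om A x y = Bf Om A y x.
Proof.
  intros HA. rewrite !Bf_double, rsum_swap. apply rsum_ext. intros i Hi.
  apply rsum_ext. intros j Hj. rewrite (HA j i) by auto. ring.
Qed.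
Lemma Bf_zero_l Om A x y : vec_eq Om x (fun _ => 0) -> Bf Om A x y = 0.
Proof.
  intros H. rewrite (Bf_ext Om A x (fun _ => 0) y y) by (auto; intros i _; reflexivity).
  unfold Bf, dot. rewrite (rsum_ext _ _ (fun _ => 0)) by (intros; ring). apply rsum_zero.
Qed.
Lemma Bf_zero_r Om A x y : vec_eq Om y (fun _ => 0) -> Bf Om A x y = 0.
Proof.
  intros H. rewrite (Bf_ext Om A x x y (fun _ => 0)) by (auto; intros i _; reflexivity).
  unfold Bf, dot, mat_vec. rewrite (rsum_ext _ _ (fun _ => 0)). apply rsum_zero.
  intros i _. rewrite (rsum_ext _ _ (fun _ => 0)) by (intros; ring). rewrite rsum_zero; ring.
Qed.

Definition psd Om A := forall x, 0 <= Bf Om A x x.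

Lemma not_nonzero Om x : ~ nonzero_vec Om x -> vec_eq Om x (fun _ => 0).
Proof.
  intros H i Hi. destruct (Req_dec (x i) 0); auto. exfalso; apply H; exists i; auto.
Qed.

Lemma pd_psd Om A : pos_def Om A -> psd Om A.
Proof.
  intros H x. destruct (classic (nonzero_vec Om x)) as [Hx|Hx].
  - apply Rlt_le, H, Hx.
  - rewrite Bf_zero_l by (apply not_nonzero; auto). lra.
Qed.

Lemma quad_disc a b c : 0 <= c -> (forall t, 0 <= a + 2 * t * b + t * t * c) -> b * b <= a * c.
Proof.
  intros Hc H. destruct (Req_dec c 0) as [Hc0|Hc0].
  - subst c. destruct (Req_dec b 0) as [Hb|Hb].
    + subst. specialize (H 0). nra.
    + specialize (H (- (a + 1) / (2 * b))).
      exfalso. assert (E : a + 2 * (- (a + 1) / (2 * b)) * b + - (a + 1) / (2 * b) * - (a + 1) / (2 * b) * 0 = -1)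
        by (field; auto). lra.
  - specialize (H (- b / c)).
    assert (E : a + 2 * (- b / c) * b + - b / c * (- b / c) * c = a - b * b / c) by (field; auto).
    rewrite E in H. assert (Hcp : 0 < c) by lra.
    assert (Hq : b * b / c <= a) by lra.
    apply Rmult_le_compat_r with (r := c) in Hq; [|lra].
    replace (b * b / c * c) with (b * b) in Hq by (field; lra). lra.
Qed.

Lemma CS Om A x y : symmetric Om A -> psd Om A ->
  Bf Om A x y * Bf Om A x y <= Bf Om A x x * Bf Om A y y.
Proof.
  intros Hs Hp. apply quad_disc; [apply Hp|]. intros t.
  specialize (Hp (fun i => 1 * x i + t * y i)).
  rewrite Bf_linl, !Bf_linr in Hp. rewrite (Bf_sym Om A y x Hs) in Hp. nra.
Qed.
Lemma rsum_minus n f g : rsum n (fun i => f i - g i) = rsum n f - rsum n g.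
Proof. induction n; simpl; [lra|rewrite IHn; ring]. Qed.

Lemma nsq_nonneg Om x : 0 <= nsq Om x.
Proof. apply rsum_nonneg. intros; nra. Qed.
Lemma sq_le_nsq Om x i : (i < Om)%nat -> x i * x i <= nsq Om x.
Proof. intros Hi. apply (rsum_term Om (fun i => x i * x i)); auto. intros; nra. Qed.
Lemma nsq_pos Om x : nonzero_vec Om x -> 0 < nsq Om x.
Proof.
  intros [i [Hi Hx]]. pose proof (sq_le_nsq Om x i Hi).
  assert (0 < x i * x i) by (apply Rsqr_pos_lt in Hx; unfold Rsqr in Hx; auto). lra.
Qed.
Lemma nsq_zero Om x : ~ nonzero_vec Om x -> nsq Om x = 0.
Proof.
  intros H. pose proof (not_nonzero Om x H) as Hz. unfold nsq.
  rewrite (rsum_ext _ _ (fun _ => 0)) by (intros i Hi; rewrite Hz by auto; ring).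
  apply rsum_zero.
Qed.

Definition Bd Om (A : mat) := rsum Om (fun i => rsum Om (fun j => Rabs (A i j))).
Lemma Bd_nonneg Om A : 0 <= Bd Om A.
Proof. apply rsum_nonneg; intros; apply rsum_nonneg; intros; apply Rabs_pos. Qed.

Lemma Bf_bound Om A x : Bf Om A x x <= Bd Om A * nsq Om x.
Proof.
  rewrite Bf_double. unfold Bd. rewrite Rmult_comm, <- rsum_scal. apply rsum_le.
  intros i Hi. rewrite <- rsum_scal. apply rsum_le. intros j Hj.
  pose proof (sq_le_nsq Om x i Hi). pose proof (sq_le_nsq Om x j Hj).
  assert (x i * x j <= nsq Om x) by nra.
  assert (- nsq Om x <= x i * x j) by nra.
  destruct (Rle_dec 0 (A i j)).
  - rewrite Rabs_pos_eq by auto. nra.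
  - rewrite Rabs_left by lra. nra.
Qed.

Lemma Bf_compose Om A N x y :
  Bf Om A (fun k => rsum Om (fun j => x j * N j k)) y =
  Bf Om (fun j l => rsum Om (fun k => N j k * A k l)) x y.
Proof.
  rewrite !Bf_double.
  transitivity (rsum Om (fun k => rsum Om (fun l => rsum Om (fun j => x j * N j k * A k l * y l)))).
  { apply rsum_ext; intros k _; apply rsum_ext; intros l _.
    match goal with |- ?s * ?a * ?b = _ => replace (s * a * b) with ((a * b) * s) by ring end.
    rewrite <- rsum_scal. apply rsum_ext; intros; ring. }
  transitivity (rsum Om (fun j => rsum Om (fun l => rsum Om (fun k => x j * N j k * A k l * y l)))).
  { transitivity (rsum Om (fun k => rsum Om (fun j => rsum Om (fun l => x j * N j k * A k l * y l)))).
    - apply rsum_ext; intros k _. apply rsum_swap.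
    - rewrite rsum_swap. apply rsum_ext; intros j _. apply rsum_swap. }
  apply rsum_ext; intros j _; apply rsum_ext; intros l _.
  match goal with |- _ = ?a * ?s * ?b => replace (a * s * b) with ((a * b) * s) by ring end.
  rewrite <- rsum_scal. apply rsum_ext; intros; ring.
Qed.

Lemma Bf_id Om A x y : (forall i j, (i < Om)%nat -> (j < Om)%nat -> A i j = if Nat.eq_dec i j then 1 else 0) ->
  Bf Om A x y = dot Om x y.
Proof.
  intros H. unfold Bf, dot, mat_vec. apply rsum_ext. intros i Hi. f_equal.
  rewrite (rsum_ext _ _ (fun j => (if Nat.eq_dec i j then 1 else 0) * y j)).
  - apply rsum_delta'; auto.
  - intros j Hj. rewrite H by auto. reflexivity.
Qed.

Lemma rayleigh Om K lam : (1 <= Om)%nat -> symmetric Om K -> is_lambda_max Om K lam ->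
  forall x, Bf Om K x x <= lam * nsq Om x.
Proof.
  intros HOm HK [_ Hlam].
  set (E := fun r => exists x, nonzero_vec Om x /\ r = Bf Om K x x / nsq Om x).
  assert (Hb : bound E).
  { exists (Bd Om K). intros r [x [Hx ->]]. pose proof (nsq_pos Om x Hx).
    pose proof (Bf_bound Om K x). apply Rmult_le_reg_r with (nsq Om x); auto.
    unfold Rdiv; rewrite Rmult_assoc, Rinv_l by lra. lra. }
  assert (Hne : exists r, E r).
  { exists (Bf Om K (e_vec 0) (e_vec 0) / nsq Om (e_vec 0)). exists (e_vec 0). split; auto.
    exists 0%nat. split; [lia|]. unfold e_vec. destruct (Nat.eq_dec 0 0); [lra|congruence]. }
  destruct (completeness E Hb Hne) as [mu [Hub Hleast]].
  assert (P1 : forall x, Bf Om K x x <= mu * nsq Om x).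
  { intros x. destruct (classic (nonzero_vec Om x)) as [Hx|Hx].
    - pose proof (nsq_pos Om x Hx).
      assert (Hr : Bf Om K x x / nsq Om x <= mu) by (apply Hub; exists x; auto).
      apply Rmult_le_compat_r with (r := nsq Om x) in Hr; [|lra].
      unfold Rdiv in Hr; rewrite Rmult_assoc, Rinv_l in Hr by lra. lra.
    - rewrite Bf_zero_l by (apply not_nonzero; auto). rewrite nsq_zero by auto. lra. }
  set (M := fun i j => (if Nat.eq_dec i j then mu else 0) - K i j).
  assert (BM : forall x y, Bf Om M x y = mu * dot Om x y - Bf Om K x y).
  { intros x y. unfold Bf, dot, mat_vec, M. rewrite <- rsum_scal, <- rsum_minus.
    apply rsum_ext. intros i Hi.
    rewrite (rsum_ext _ _ (fun j => mu * ((if Nat.eq_dec i j then 1 else 0) * y j) - K i j * y j)).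
    - rewrite rsum_minus, rsum_scal, rsum_delta' by auto. ring.
    - intros j _. destruct (Nat.eq_dec i j); ring. }
  assert (HMs : symmetric Om M).
  { intros i j Hi Hj. unfold M. rewrite (HK i j) by auto.
    destruct (Nat.eq_dec i j), (Nat.eq_dec j i); subst; try ring; congruence. }
  assert (HMp : psd Om M).
  { intros x. rewrite BM. pose proof (P1 x). unfold nsq in *. unfold dot. lra. }
  destruct (MC.dichot Om M) as [[v [Hv Hker]] | [N HN]].
  - assert (Hev : is_eigenvalue Om K mu).
    { exists v. split; auto. intros i Hi. specialize (Hker i Hi).
      unfold mat_vec. unfold M in Hker.
      rewrite (rsum_ext _ _ (fun k => mu * (v k * (if Nat.eq_dec k i then 1 else 0)) - K i k * v k)) in Hker.
      - rewrite rsum_minus, rsum_scal, rsum_delta in Hker by auto.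
        lra.
      - intros k Hk. rewrite (HK i k) by auto. destruct (Nat.eq_dec k i); simpl; ring. }
    pose proof (Hlam mu Hev). intros x. pose proof (P1 x). pose proof (nsq_nonneg Om x). nra.
  - exfalso.
    set (Nt := fun j k => N k j).
    set (c := Bd Om Nt + 1).
    assert (Hc : 0 < c) by (pose proof (Bd_nonneg Om Nt); unfold c; lra).
    assert (Key : forall x, Bf Om K x x <= (mu - / c) * nsq Om x).
    { intros x.
      set (z := fun k => rsum Om (fun j => x j * N j k)).
      assert (Ha : Bf Om M z x = nsq Om x).
      { unfold z. rewrite Bf_compose. rewrite Bf_id. reflexivity.
        intros i j Hi Hj. rewrite HN by auto. destruct (Nat.eq_dec i j); reflexivity. }
      assert (Hbz : Bf Om M z z = Bf Om Nt x x).
      { unfold z at 1. rewrite Bf_compose. rewrite Bf_id.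
        - unfold dot, Bf, mat_vec, Nt, z. apply rsum_ext. intros i _. f_equal.
          apply rsum_ext. intros; ring.
        - intros i j Hi Hj. rewrite HN by auto. destruct (Nat.eq_dec i j); reflexivity. }
      pose proof (CS Om M z x HMs HMp) as Hcs. rewrite Ha, Hbz in Hcs.
      pose proof (Bf_bound Om Nt x). pose proof (HMp x). pose proof (nsq_nonneg Om x).
      pose proof (Bd_nonneg Om Nt).
      assert (Hn : nsq Om x <= c * Bf Om M x x).
      { destruct (Req_dec (nsq Om x) 0) as [Hz0|Hz0]; [rewrite Hz0; nra|].
        assert (nsq Om x * nsq Om x <= (Bd Om Nt * Bf Om M x x) * nsq Om x) by nra.
        assert (nsq Om x <= Bd Om Nt * Bf Om M x x) by nra.
        unfold c. nra. }
      rewrite BM in Hn. unfold dot in Hn. fold (nsq Om x) in Hn.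
      assert (/ c * nsq Om x <= / c * (c * (mu * nsq Om x - Bf Om K x x))).
      { apply Rmult_le_compat_l; auto. apply Rlt_le, Rinv_0_lt_compat; auto. }
      rewrite <- Rmult_assoc, Rinv_l in H3 by lra. lra. }
    assert (Hub2 : is_upper_bound E (mu - / c)).
    { intros r [x [Hx ->]]. pose proof (nsq_pos Om x Hx). pose proof (Key x).
      apply Rmult_le_reg_r with (nsq Om x); auto.
      unfold Rdiv; rewrite Rmult_assoc, Rinv_l by lra. lra. }
    pose proof (Hleast _ Hub2). pose proof (Rinv_0_lt_compat c Hc). lra.
Qed.
Lemma rmin_le n f j : (j <= n)%nat -> rmin_upto n f <= f j.
Proof.
  induction n; simpl; intros Hj.
  - assert (j = 0%nat) by lia. subst. lra.
  - destruct (Nat.eq_dec j (S n)).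
    + subst. apply Rmin_r.
    + eapply Rle_trans; [apply Rmin_l| apply IHn; lia].
Qed.
Lemma rmin_pos n f : (forall j, (j <= n)%nat -> 0 < f j) -> 0 < rmin_upto n f.
Proof.
  induction n; simpl; intros H; [apply H; lia|].
  apply Rmin_glb_lt; [apply IHn; intros; apply H; lia| apply H; lia].
Qed.
Lemma rmax_ge n f j : (j <= n)%nat -> f j <= rmax_upto n f.
Proof.
  induction n; simpl; intros Hj.
  - assert (j = 0%nat) by lia. subst. lra.
  - destruct (Nat.eq_dec j (S n)).
    + subst. apply Rmax_r.
    + eapply Rle_trans; [apply IHn; lia| apply Rmax_l].
Qed.

Lemma inv_facts Om K Kinv : symmetric Om K -> pos_def Om K -> is_inverse Om K Kinv ->
  forall j, (j < Om)%nat -> 0 < Kinv j j /\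
   forall u, u j * u j <= Kinv j j * Bf Om K u u.
Proof.
  intros HK Hpd Hinv j Hj.
  set (z := fun k => Kinv k j).
  assert (Hmz : forall k, (k < Om)%nat -> mat_vec Om K z k = if Nat.eq_dec k j then 1 else 0).
  { intros k Hk. unfold mat_vec, z. apply (Hinv k j Hk Hj). }
  assert (Huz : forall u, Bf Om K u z = u j).
  { intros u. unfold Bf, dot. rewrite (rsum_ext _ _ (fun k => u k * (if Nat.eq_dec k j then 1 else 0))).
    - apply rsum_delta; auto.
    - intros k Hk. rewrite Hmz; auto. }
  assert (Hzz : Bf Om K z z = Kinv j j) by (rewrite Huz; reflexivity).
  assert (Hpos : 0 < Kinv j j).
  { rewrite <- Hzz. apply Hpd. destruct (classic (nonzero_vec Om z)) as [H|H]; auto.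
    exfalso. pose proof (Huz (e_vec j)) as E. rewrite Bf_zero_r in E by (apply not_nonzero; auto).
    unfold e_vec in E. destruct (Nat.eq_dec j j); [lra|congruence]. }
  split; auto. intros u. pose proof (CS Om K u z HK (pd_psd Om K Hpd)) as H.
  rewrite Huz, Hzz in H. lra.
Qed.

Lemma lam_pos Om K lam : pos_def Om K -> is_lambda_max Om K lam -> 0 < lam.
Proof.
  intros Hpd [[v [Hv Hev]] _].
  pose proof (Hpd v Hv) as H. unfold normK2, dot in H.
  rewrite (rsum_ext _ _ (fun i => lam * (v i * v i))) in H.
  - rewrite rsum_scal in H. pose proof (nsq_nonneg Om v). unfold nsq in *. nra.
  - intros i Hi. rewrite Hev by auto. ring.
Qed.

Lemma Bf_comb Om A a b p q a' b' p' q' :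
  Bf Om A (fun j => a * p j + b * q j) (fun j => a' * p' j + b' * q' j) =
  a * a' * Bf Om A p p' + a * b' * Bf Om A p q' + b * a' * Bf Om A q p' + b * b' * Bf Om A q q'.
Proof. rewrite Bf_linl, !Bf_linr. ring. Qed.

Lemma div_nonneg a b : 0 <= a -> 0 < b -> 0 <= a / b.
Proof. intros. unfold Rdiv. apply Rmult_le_pos; auto. apply Rlt_le, Rinv_0_lt_compat; auto. Qed.
Lemma rsum_e Om i : (i < Om)%nat -> rsum Om (e_vec i) = 1.
Proof.
  intros Hi. unfold e_vec. rewrite (rsum_ext _ _ (fun k => 1 * (if Nat.eq_dec k i then 1 else 0)))
    by (intros; ring). apply rsum_delta; auto.
Qed.

Lemma vsub_ext Om x x' y y' : vec_eq Om x x' -> vec_eq Om y y' -> vec_eq Om (vsub x y) (vsub x' y').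
Proof. intros H1 H2 k Hk. unfold vsub. rewrite H1, H2 by auto. reflexivity. Qed.

Ltac nB H1 H2 H3 := repeat (first [rewrite H1|rewrite H2|rewrite H3]).

Lemma step Om K Kinv lam what w i w' :
  (2 <= Om)%nat -> symmetric Om K -> pos_def Om K -> is_lambda_max Om K lam ->
  is_inverse Om K Kinv -> in_simplex_interior Om what -> in_simplex Om w ->
  is_vertex_choice Om K what w i -> vd_step Om K what w i w' ->
  in_simplex Om w' /\
  normK2 Om K (vsub w' what) <= normK2 Om K (vsub w what) *
    (1 - (rmin_upto (Om - 1) what) ^ 2 / rmax_upto (Om - 1) (fun k => Kinv k k)
           / (4 * (lam * (1 - 1 / INR Om)))).
Proof.
  intros HOm HK Hpd Hlam Hinv [Hh_pos Hh_sum] [Hw_nn Hw_sum] [Hi Hmin] [Hst1 Hst2].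
  assert (Hpsd : psd Om K) by (apply pd_psd; auto).
  set (wstar := rmin_upto (Om - 1) what).
  set (L2 := rmax_upto (Om - 1) (fun k => Kinv k k)).
  set (e := e_vec i).
  set (u := vsub w what).
  set (g := mat_vec Om K u).
  set (old := normK2 Om K u).
  set (Bee := Bf Om K e e). set (Bew := Bf Om K e w). set (Beh := Bf Om K e what).
  set (Bww := Bf Om K w w). set (Bwh := Bf Om K w what). set (Bhh := Bf Om K what what).
  assert (Swe : Bf Om K w e = Bew) by (apply Bf_sym; auto).
  assert (She : Bf Om K what e = Beh) by (apply Bf_sym; auto).
  assert (Shw : Bf Om K what w = Bwh) by (apply Bf_sym; auto).
  assert (Eu : vec_eq Om u (fun j => 1 * w j + (-1) * what j)) by (intros k _; unfold u, vsub; ring).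
  assert (Hold : old = Bww - 2 * Bwh + Bhh).
  { unfold old. change (Bf Om K u u = Bww - 2 * Bwh + Bhh).
    rewrite (Bf_ext _ _ _ _ _ _ Eu Eu), Bf_comb. nB Swe She Shw; fold Bee Bew Beh Bww Bwh Bhh. ring. }
  set (c := dot Om (vsub e w) (mat_vec Om K (vsub what w))).
  assert (Hc : c = Beh - Bew - Bwh + Bww).
  { unfold c. change (Bf Om K (vsub e w) (vsub what w) = Beh - Bew - Bwh + Bww).
    rewrite (Bf_ext Om K (vsub e w) (fun j => 1 * e j + (-1) * w j) (vsub what w) (fun j => 1 * what j + (-1) * w j))
      by (intros k _; unfold vsub; ring).
    rewrite Bf_comb. nB Swe She Shw; fold Bee Bew Beh Bww Bwh Bhh. ring. }
  set (D := normK2 Om K (vsub e w)).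
  assert (Ed : vec_eq Om (vsub e w) (fun j => 1 * e j + (-1) * w j)) by (intros k _; unfold vsub; ring).
  assert (HD : D = Bee - 2 * Bew + Bww).
  { unfold D. change (Bf Om K (vsub e w) (vsub e w) = Bee - 2 * Bew + Bww).
    rewrite (Bf_ext _ _ _ _ _ _ Ed Ed), Bf_comb. nB Swe She Shw; fold Bee Bew Beh Bww Bwh Bhh. ring. }
  assert (Hgi : g i = Bew - Beh).
  { transitivity (Bf Om K e u).
    - unfold Bf, dot, e, e_vec. fold g.
      rewrite (rsum_ext _ _ (fun k => g k * (if Nat.eq_dec k i then 1 else 0))) by (intros; ring).
      rewrite rsum_delta; auto.
    - rewrite (Bf_ext _ _ e e _ _ (fun k _ => eq_refl) Eu), Bf_linr. fold Bew Beh. ring. }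
  set (S := dot Om what g).
  assert (HS : S = Bwh - Bhh).
  { unfold S. change (Bf Om K what u = Bwh - Bhh).
    rewrite (Bf_ext _ _ what what _ _ (fun k _ => eq_refl) Eu), Bf_linr, Shw. fold Bhh. ring. }
  set (Q := S - g i).
  assert (HcQ : c - old = Q) by (unfold Q; rewrite Hc, Hold, HS, Hgi; ring).
  assert (Hold_nn : 0 <= old) by apply Hpsd.
  assert (Heh : 0 <= Bee - 2 * Beh + Bhh).
  { pose proof (Hpsd (fun j => 1 * e j + (-1) * what j)) as H. rewrite Bf_comb, She in H.
    fold Bee Beh Bhh in H. lra. }
  assert (Hgg : forall j, (j < Om)%nat -> 0 <= g j - g i).
  { intros j Hj. pose proof (Hmin j Hj). fold u g in H. lra. }
  set (T := rsum Om (fun j => g j - g i)).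
  assert (HT : 0 <= T) by (apply rsum_nonneg; auto).
  assert (Hwstar : 0 < wstar) by (apply rmin_pos; intros; apply Hh_pos; lia).
  assert (HQ : wstar * T <= Q).
  { assert (E1 : Q = rsum Om (fun j => what j * (g j - g i))).
    { unfold Q, S, dot.
      rewrite (rsum_ext _ (fun j => what j * (g j - g i)) (fun j => what j * g j - g i * what j))
        by (intros; ring).
      rewrite rsum_minus, rsum_scal, Hh_sum. ring. }
    rewrite E1. unfold T. rewrite <- rsum_scal. apply rsum_le. intros j Hj.
    pose proof (Hgg j Hj). pose proof (rmin_le (Om - 1) what j ltac:(lia)). fold wstar in H0. nra. }
  assert (HL2 : 0 < L2).
  { pose proof (proj1 (inv_facts Om K Kinv HK Hpd Hinv 0%nat ltac:(lia))).
    pose proof (rmax_ge (Om - 1) (fun k => Kinv k k) 0%nat ltac:(lia)). fold L2 in H0. lra. }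
  set (s := sqrt (L2 * old)).
  assert (Hs0 : 0 <= s) by apply sqrt_pos.
  assert (Hs2 : s * s = L2 * old) by (apply sqrt_sqrt; nra).
  assert (Hold2 : old <= s * T).
  { assert (E1 : old = rsum Om (fun j => u j * (g j - g i))).
    { rewrite (rsum_ext _ (fun j => u j * (g j - g i)) (fun j => u j * g j - g i * u j)) by (intros; ring).
      rewrite rsum_minus, rsum_scal.
      assert (Hu0 : rsum Om u = 0).
      { unfold u, vsub. rewrite rsum_minus, Hw_sum, Hh_sum. ring. }
      rewrite Hu0. unfold old, normK2. fold g. unfold dot. ring. }
    rewrite E1. unfold T. rewrite <- rsum_scal. apply rsum_le. intros j Hj.
    pose proof (Hgg j Hj).
    destruct (inv_facts Om K Kinv HK Hpd Hinv j Hj) as [_ Hu].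
    specialize (Hu u). change (Bf Om K u u) with old in Hu.
    pose proof (rmax_ge (Om - 1) (fun k => Kinv k k) j ltac:(lia)). fold L2 in H0. simpl in H0.
    assert (Kinv j j * old <= L2 * old) by (apply Rmult_le_compat_r; auto).
    assert (u j * u j <= s * s) by nra.
    assert (u j <= s) by nra. nra. }
  assert (HwQ : wstar * old <= s * Q) by nra.
  assert (HQ0 : 0 <= Q) by nra.
  assert (HDc : c <= D) by (rewrite HD, Hc; unfold Q in HcQ, HQ0; rewrite HS, Hgi in HQ0; lra).
  assert (Hc2 : wstar ^ 2 / L2 * old <= c * c).
  { assert (Hsq : wstar * old * (wstar * old) <= s * Q * (s * Q)).
    { apply Rmult_le_compat; nra. }
    assert (Hk : wstar ^ 2 * old <= L2 * (Q * Q)).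
    { destruct (Req_dec old 0) as [Ho|Ho].
      - rewrite Ho. nra.
      - assert (0 < old) by lra.
        assert (old * (wstar ^ 2 * old) <= old * (L2 * (Q * Q))).
        { replace (old * (wstar ^ 2 * old)) with (wstar * old * (wstar * old)) by ring.
          replace (old * (L2 * (Q * Q))) with (s * Q * (s * Q)) by (transitivity (s * s * (Q * Q)); [ring| rewrite Hs2; ring]). auto. }
        nra. }
    assert (wstar ^ 2 / L2 * old = wstar ^ 2 * old / L2) by (field; lra).
    rewrite H. apply Rmult_le_reg_r with L2; auto.
    replace (wstar ^ 2 * old / L2 * L2) with (wstar ^ 2 * old) by (field; lra).
    assert (Q * Q <= c * c) by nra. nra. }
  assert (Hlam0 : 0 < lam) by (eapply lam_pos; eauto).
  assert (HINR : 2 <= INR Om) by (replace 2 with (INR 2) by (simpl; ring); apply le_INR; auto).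
  set (R4 := 4 * (lam * (1 - 1 / INR Om))).
  assert (HR4 : 2 * lam <= R4).
  { unfold R4. assert (1 / INR Om <= 1 / 2).
    { apply Rmult_le_reg_r with (INR Om * 2); [lra|].
      unfold Rdiv. replace (1 * / INR Om * (INR Om * 2)) with 2 by (field; lra).
      replace (1 * / 2 * (INR Om * 2)) with (INR Om) by field. lra. }
    nra. }
  destruct (classic (vec_eq Om e w)) as [Hew|Hnew].
  -
    pose proof (Hst1 Hew) as Hw'.
    assert (Hc0 : c = 0).
    { unfold c. change (Bf Om K (vsub e w) (vsub what w) = 0). apply Bf_zero_l.
      intros k Hk. unfold vsub. rewrite Hew by auto. ring. }
    assert (Hold0 : old = 0) by lra.
    split.
    + split.
      * intros k Hk. rewrite Hw' by auto. auto.
      * rewrite (rsum_ext _ _ w) by (intros; apply Hw'; auto). auto.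
    + assert (normK2 Om K (vsub w' what) = old).
      { unfold old. change (Bf Om K (vsub w' what) (vsub w' what) = Bf Om K u u).
        apply Bf_ext; unfold u; apply vsub_ext; auto; intros k _; reflexivity. }
      rewrite H. fold u old. rewrite Hold0. lra.
  - pose proof (Hst2 Hnew) as Hw'.
    assert (HDpos : 0 < D).
    { apply Hpd. apply NNPP. intros Hn. apply Hnew. intros k Hk.
      pose proof (not_nonzero Om _ Hn k Hk). unfold vsub in H. lra. }
    assert (Hc_nn : 0 <= c) by lra.
    set (al := alpha_hat Om K what w i).
    assert (Hal : al = c / D) by reflexivity.
    assert (Hal0 : 0 <= al) by (rewrite Hal; apply div_nonneg; lra).
    assert (Hal1 : al <= 1).
    { rewrite Hal. apply Rmult_le_reg_r with D; auto. unfold Rdiv.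
      rewrite Rmult_assoc, Rinv_l by lra. lra. }
    split.
    + split.
      * intros k Hk. rewrite Hw' by auto. unfold vadd, vscale, vsub.
        pose proof (Hw_nn k Hk). fold al.
        assert (He0 : 0 <= e_vec i k) by (unfold e_vec; destruct (Nat.eq_dec k i); lra).
        assert (0 <= (1 - al) * w k) by (apply Rmult_le_pos; lra).
        assert (0 <= al * e_vec i k) by (apply Rmult_le_pos; lra).
        unfold e. lra.
      * rewrite (rsum_ext _ _ (fun k => w k + al * (e k - w k))) by (intros; apply Hw'; auto).
        rewrite rsum_plus, rsum_scal, rsum_minus, Hw_sum. unfold e. rewrite rsum_e by auto. ring.
    + assert (Hnew_eq : normK2 Om K (vsub w' what) = old - c * c / D).
      { change (Bf Om K (vsub w' what) (vsub w' what) = old - c * c / D).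
        set (r := fun j => (1 - al) * w j + (-1) * what j).
        assert (Ev : vec_eq Om (vsub w' what) (fun j => al * e j + 1 * r j)).
        { intros k Hk. unfold vsub. rewrite Hw' by auto. unfold vadd, vscale, vsub, r, e. fold al. ring. }
        rewrite (Bf_ext _ _ _ _ _ _ Ev Ev), Bf_comb.
        unfold r. rewrite Bf_linl, Bf_linr, Bf_comb, She, Swe, Shw. fold Bee Bew Beh Bww Bwh Bhh.
        rewrite Hold, Hal, Hc. rewrite HD in HDpos |- *. field. lra. }
      rewrite Hnew_eq. fold u old.
      assert (Hnsq : nsq Om (vsub e w) <= 2).
      { apply Rle_trans with (rsum Om (fun k => e k + w k)).
        - apply rsum_le. intros k Hk. unfold vsub, e, e_vec.
          pose proof (Hw_nn k Hk).
          assert (w k <= 1) by (rewrite <- Hw_sum; apply (rsum_term Om w k); auto).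
          destruct (Nat.eq_dec k i); nra.
        - rewrite rsum_plus, Hw_sum. unfold e. rewrite rsum_e by auto. lra. }
      pose proof (rayleigh Om K lam ltac:(lia) HK Hlam (vsub e w)) as Hray.
      change (Bf Om K (vsub e w) (vsub e w)) with D in Hray.
      assert (HDR : D <= R4) by nra.
      fold wstar L2 R4.
      set (a2 := wstar ^ 2 / L2).
      assert (Ha2 : 0 <= a2) by (unfold a2; apply div_nonneg; [nra|lra]).
      assert (H1 : a2 * old / R4 <= a2 * old / D).
      { apply Rmult_le_compat_l; [nra|]. apply Rinv_le_contravar; auto. }
      assert (H2 : a2 * old / D <= c * c / D).
      { apply Rmult_le_compat_r; [apply Rlt_le, Rinv_0_lt_compat; auto| exact Hc2]. }
      assert (E : old * (1 - a2 / R4) = old - a2 * old / R4) by (field; lra).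
      rewrite E. lra.
Qed.

Theorem lemmaA6 (Om : nat) (K Kinv : mat) (lam : R) (what : vec)
  (w : nat -> vec) (idx : nat -> nat) :
  (2 <= Om)%nat ->
  symmetric Om K -> pos_def Om K ->
  is_lambda_max Om K lam ->
  is_inverse Om K Kinv ->
  in_simplex_interior Om what ->
  in_simplex Om (w 1%nat) ->
  (forall n, (1 <= n)%nat ->
     is_vertex_choice Om K what (w n) (idx n) /\
     vd_step Om K what (w n) (idx n) (w (S n))) ->
  let Rstar := sqrt (lam * (1 - 1 / INR Om)) in
  let wstar := rmin_upto (Om - 1) what in
  let L := sqrt (rmax_upto (Om - 1) (fun i => Kinv i i)) in
  let astar := wstar / L in
  forall n, (1 <= n)%nat ->
    normK2 Om K (vsub (w (S n)) what)
    <= normK2 Om K (vsub (w 1%nat) what)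
       * exp (- (astar ^ 2 * INR n) / (4 * Rstar ^ 2)).
Proof.
  intros HOm HK Hpd Hlam Hinv Hh Hw1 Hit Rstar wstar L astar.
  set (L2 := rmax_upto (Om - 1) (fun i => Kinv i i)).
  set (y := wstar ^ 2 / L2 / (4 * (lam * (1 - 1 / INR Om)))).
  assert (Hlam0 : 0 < lam) by (eapply lam_pos; eauto).
  assert (HINR : 2 <= INR Om) by (replace 2 with (INR 2) by (simpl; ring); apply le_INR; auto).
  assert (Hfrac : 0 < 1 - 1 / INR Om).
  { assert (1 / INR Om < 1).
    { apply Rmult_lt_reg_r with (INR Om); [lra|]. unfold Rdiv.
      rewrite Rmult_assoc, Rinv_l by lra. lra. }
    lra. }
  assert (HL2 : 0 < L2).
  { pose proof (proj1 (inv_facts Om K Kinv HK Hpd Hinv 0%nat ltac:(lia))).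
    pose proof (rmax_ge (Om - 1) (fun k => Kinv k k) 0%nat ltac:(lia)). fold L2 in H0. lra. }
  assert (HR : Rstar ^ 2 = lam * (1 - 1 / INR Om)) by (unfold Rstar; apply pow2_sqrt; nra).
  assert (HL : L ^ 2 = L2) by (unfold L; apply pow2_sqrt; fold L2; lra).
  assert (HLpos : 0 < L) by (unfold L; apply sqrt_lt_R0; fold L2; lra).
  assert (Ha : astar ^ 2 = wstar ^ 2 / L2).
  { unfold astar. rewrite <- HL. field. lra. }
  assert (Hexp : forall n, - (astar ^ 2 * INR n) / (4 * Rstar ^ 2) = - (y * INR n)).
  { intros n. rewrite Ha, HR. unfold y. field. split; lra. }
  assert (Hsimp : forall n, (1 <= n)%nat -> in_simplex Om (w n)).
  { intros n Hn. induction n; [lia|].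
    destruct (Nat.eq_dec n 0) as [->|Hn0]; auto.
    destruct (Hit n ltac:(lia)) as [Hv Hs].
    apply (proj1 (step Om K Kinv lam what (w n) (idx n) (w (S n)) HOm HK Hpd Hlam Hinv Hh (IHn ltac:(lia)) Hv Hs)). }
  assert (Hstep : forall n, (1 <= n)%nat ->
     normK2 Om K (vsub (w (S n)) what) <= normK2 Om K (vsub (w n) what) * exp (- y)).
  { intros n Hn. destruct (Hit n Hn) as [Hv Hs].
    pose proof (proj2 (step Om K Kinv lam what (w n) (idx n) (w (S n)) HOm HK Hpd Hlam Hinv Hh (Hsimp n Hn) Hv Hs)) as H.
    fold wstar L2 y in H.
    pose proof (exp_ineq1_le (- y)).
    assert (0 <= normK2 Om K (vsub (w n) what)) by (apply (pd_psd Om K Hpd)).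
    eapply Rle_trans; [exact H|]. apply Rmult_le_compat_l; auto; lra. }
  intros n Hn. rewrite Hexp.
  induction n; [lia|].
  destruct (Nat.eq_dec n 0) as [->|Hn0].
  - simpl INR. replace (- (y * 1)) with (- y) by ring. apply Hstep; lia.
  - eapply Rle_trans; [apply Hstep; lia|].
    pose proof (IHn ltac:(lia)) as IH.
    rewrite S_INR. replace (- (y * (INR n + 1))) with (- (y * INR n) + - y) by ring.
    rewrite exp_plus. pose proof (exp_pos (- y)).
    replace (normK2 Om K (vsub (w 1%nat) what) * (exp (- (y * INR n)) * exp (- y)))
      with (normK2 Om K (vsub (w 1%nat) what) * exp (- (y * INR n)) * exp (- y)) by ring.
    apply Rmult_le_compat_r; lra.
Qed.
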